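(* Let $a_{12},d>0$ and consider the rectangle with vertices $A_1'=(-a_{12}/2,\,d)$, $A_2'=(a_{12}/2,\,d)$, $A_4=(-a_{12}/2,\,0)$, $A_3=(a_{12}/2,\,0)$; let $M_{12}=(0,d)$, $M_{34}=(0,0)$. Let $F$ be the intersection of the diagonals $A_1'A_3$, $A_2'A_4$ and $\theta=\angle A_1'FA_2'$, and assume $\theta<90^\circ$. Let $F_{12}$ be the orthocenter of triangle $A_1'FA_2'$, $F_{34}$ the orthocenter of triangle $A_4FA_3$, $w(\theta)=2\sin\frac{\theta}{2}$, and $O_{12},O_{34}$ the points on segment $M_{12}M_{34}$ with $\angle A_1'O_{12}A_2'=\angle A_4O_{34}A_3=120^\circ$. Then $$2|A_1'F_{12}|+2|A_3F_{34}|+w(\theta)|F_{12}F_{34}|=4a_{12}\cos\frac{\theta}{2}$$ and $$2|A_1'O_{12}|+2|A_3O_{34}|+|O_{12}O_{34}|=a_{12}\left(\sqrt{3}+\frac{\cos\frac{\theta}{2}}{\sin\frac{\theta}{2}}\right).$$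
   Context: $|XY|$ denotes Euclidean distance. This is the case $a_{34}=a_{12}$ of an isosceles trapezium with parallel sides $A_1'A_2'$ (length $a_{12}$) and $A_4A_3$ (length $a_{34}$) at distance $d$. *)

(* Defs.v *)
From Stdlib Require Export Reals Lra.
Open Scope R_scope.

Definition pt := (R * R)%type.

Definition edist (X Y : pt) : R :=
  sqrt ((fst X - fst Y) ^ 2 + (snd X - snd Y) ^ 2).

Definition dot (U V : pt) : R := fst U * fst V + snd U * snd V.
Definition vsub (X Y : pt) : pt := (fst X - fst Y, snd X - snd Y).

(* Angle XOY (at vertex O), in [0, PI], for X, Y distinct from O. *)
Definition angle (X O Y : pt) : R :=
  acos (dot (vsub X O) (vsub Y O) / (edist X O * edist Y O)).

Definition on_line (X Y Z : pt) : Prop :=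
  (fst Y - fst X) * (snd Z - snd X) - (snd Y - snd X) * (fst Z - fst X) = 0.

Definition on_segment (X Y Z : pt) : Prop :=
  exists t, 0 <= t <= 1 /\
    Z = (fst X + t * (fst Y - fst X), snd X + t * (snd Y - snd X)).

(* H is the orthocenter of triangle ABC: the intersection of the altitudes
   from A and from B (hence also from C). *)
Definition is_orthocenter (H A B C : pt) : Prop :=
  dot (vsub H A) (vsub B C) = 0 /\ dot (vsub H B) (vsub A C) = 0.

(* Main.v *)
Require Import Defs.
From Stdlib Require Import Reals Lra Psatz.
Open Scope R_scope.

Lemma sqrt_eqv (E v : R) : 0 <= v -> E = v * v -> sqrt E = v.
Proof. intros H ->; apply sqrt_square; exact H. Qed.

Lemma sq_inj (x y : R) : 0 <= x -> 0 <= y -> x * x = y * y -> x = y.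
Proof. intros. nra. Qed.

Lemma div_nn (x y : R) : 0 <= x -> 0 < y -> 0 <= x / y.
Proof. intros; unfold Rdiv; apply Rle_mult_inv_pos; auto. Qed.

Lemma cos_2PI3 : cos (2 * PI / 3) = - 1 / 2.
Proof.
  replace (2 * PI / 3) with (2 * (PI / 3)) by field.
  rewrite cos_2a_cos, cos_PI3; field.
Qed.

Lemma angle_O (a k y : R) : 0 < a ->
  angle (- a / 2, k) (0, y) (a / 2, k) = 2 * PI / 3 -> 3 * (k - y) ^ 2 = a ^ 2 / 4.
Proof.
  intros ha h.
  unfold angle, edist, dot, vsub in h; cbn [fst snd] in h.
  set (T := sqrt ((- a / 2 - 0) ^ 2 + (k - y) ^ 2)) in h.
  set (T' := sqrt ((a / 2 - 0) ^ 2 + (k - y) ^ 2)) in h.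
  assert (HT : T' = T).
  { unfold T, T'; apply f_equal; field. }
  rewrite HT in h.
  assert (HT2 : T * T = a^2/4 + (k-y)^2).
  { unfold T; rewrite sqrt_sqrt. field. apply Rplus_le_le_0_compat; apply pow2_ge_0. }
  assert (HTp : 0 < T * T) by (rewrite HT2; assert (0 < a^2) by (apply pow_lt; lra); assert (0 <= (k-y)^2) by apply pow2_ge_0; lra).
  set (c := ((- a / 2 - 0) * (a / 2 - 0) + (k - y) * (k - y)) / (T * T)) in h.
  assert (Hnum : c * (T*T) = (- a / 2 - 0) * (a / 2 - 0) + (k - y) * (k - y)) by (unfold c; field; intro Hz; rewrite Hz in HTp; lra).
  assert (Hu2 : 0 <= (k-y)^2) by apply pow2_ge_0.
  assert (Ha2 : 0 < a^2) by (apply pow_lt; lra).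
  assert (Hc : -1 <= c <= 1).
  { split; apply (Rmult_le_reg_r (T*T)); auto; rewrite ?Hnum; rewrite HT2; nra. }
  assert (cos (acos c) = cos (2 * PI / 3)) by (rewrite h; reflexivity).
  rewrite cos_acos in H by exact Hc. rewrite cos_2PI3 in H.
  rewrite H in Hnum. rewrite HT2 in Hnum.
  replace ((k-y)^2) with ((k-y)*(k-y)) in * by field.
  replace (a^2) with (a*a) in * by field.
  lra.
Qed.

Theorem corollary1
  (a12 d : R) (F F12 F34 O12 O34 : pt)
  (ha : 0 < a12) (hd : 0 < d)
  (hF1 : on_line (- a12 / 2, d) (a12 / 2, 0) F)
  (hF2 : on_line (a12 / 2, d) (- a12 / 2, 0) F)
  (htheta : angle (- a12 / 2, d) F (a12 / 2, d) < PI / 2)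
  (hF12 : is_orthocenter F12 (- a12 / 2, d) F (a12 / 2, d))
  (hF34 : is_orthocenter F34 (- a12 / 2, 0) F (a12 / 2, 0))
  (hO12s : on_segment (0, d) (0, 0) O12)
  (hO34s : on_segment (0, d) (0, 0) O34)
  (hO12 : angle (- a12 / 2, d) O12 (a12 / 2, d) = 2 * PI / 3)
  (hO34 : angle (- a12 / 2, 0) O34 (a12 / 2, 0) = 2 * PI / 3) :
  let A1' : pt := (- a12 / 2, d) in
  let A2' : pt := (a12 / 2, d) in
  let A4 : pt := (- a12 / 2, 0) in
  let A3 : pt := (a12 / 2, 0) in
  let theta := angle A1' F A2' in
  let w := 2 * sin (theta / 2) in
  2 * edist A1' F12 + 2 * edist A3 F34 + w * edist F12 F34
    = 4 * a12 * cos (theta / 2)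
  /\
  2 * edist A1' O12 + 2 * edist A3 O34 + edist O12 O34
    = a12 * (sqrt 3 + cos (theta / 2) / sin (theta / 2)).
Proof.
  set (a := a12) in *.
  destruct F as [fx fy].
  unfold on_line in hF1, hF2; cbn [fst snd] in hF1, hF2.
  assert (Hfx : fx = 0).
  { assert (d * fx = 0) by lra. destruct (Rmult_integral _ _ H); lra. }
  subst fx.
  assert (Hfy : fy = d / 2).
  { assert (a * (fy - d/2) = 0) by lra. destruct (Rmult_integral _ _ H); lra. }
  subst fy.
  intros A1' A2' A4 A3 theta w.
  assert (Hd2 : 0 < (d/2)^2) by (apply pow_lt; lra).
  assert (Ha2 : 0 < a^2) by (apply pow_lt; lra).
  set (S := sqrt ((d/2)^2 + a^2/4)).
  assert (HS2 : S * S = (d/2)^2 + a^2/4) by (unfold S; rewrite sqrt_sqrt; [field | lra]).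
  assert (HSp : 0 < S) by (unfold S; apply sqrt_lt_R0; lra).
  assert (HSS : 0 < S * S) by (apply Rmult_lt_0_compat; lra).
  assert (E1 : edist A1' (0, d/2) = S).
  { unfold edist, A1', S; cbn [fst snd]. apply f_equal; field. }
  assert (E2 : edist A2' (0, d/2) = S).
  { unfold edist, A2', S; cbn [fst snd]. apply f_equal; field. }
  assert (E3 : dot (vsub A1' (0, d/2)) (vsub A2' (0, d/2)) = (d/2)^2 - a^2/4).
  { unfold dot, vsub, A1', A2'; cbn [fst snd]; field. }
  set (c := ((d/2)^2 - a^2/4) / (S * S)).
  assert (Hth : theta = acos c).
  { unfold theta, angle. rewrite E1, E2, E3. reflexivity. }
  assert (Hnum : c * (S * S) = (d/2)^2 - a^2/4) by (unfold c; field; lra).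
  assert (Hc : -1 <= c <= 1).
  { split; apply (Rmult_le_reg_r (S*S)); auto; rewrite ?Hnum; rewrite HS2; lra. }
  assert (Hcos : cos theta = c) by (rewrite Hth; apply cos_acos, Hc).
  assert (Hb := acos_bound c). rewrite <- Hth in Hb.
  assert (Hdpos : a < d).
  { assert (0 < cos theta) by (assert (Htht : theta < PI/2) by exact htheta; pose proof PI_RGT_0; apply cos_gt_0; lra).
    rewrite Hcos in H.
    assert (0 < c * (S*S)) by (apply Rmult_lt_0_compat; lra).
    rewrite Hnum in H0.
    replace ((d/2)^2) with ((d/2)*(d/2)) in H0 by field.
    replace (a^2) with (a*a) in H0 by field. assert (0 < a + d) by lra. nra. }
  set (cs := cos (theta/2)). set (sn := sin (theta/2)).
  assert (Hcs0 : 0 <= cs) by (apply cos_ge_0; lra).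
  assert (Hsn0 : 0 <= sn) by (apply sin_ge_0; lra).
  assert (Hcs2 : 2 * cs * cs - 1 = cos theta).
  { unfold cs; rewrite <- cos_2a_cos; f_equal; field. }
  assert (Hpy : sn * sn + cs * cs = 1) by (unfold sn, cs; rewrite <- !Rsqr_pow2 || idtac; pose proof (sin2_cos2 (theta/2)); unfold Rsqr in H; lra).
  assert (Hcsq : cs * cs = (1 + c) / 2) by lra.
  assert (Hsnq : sn * sn = (1 - c) / 2) by lra.
  assert (Hcs : cs = (d/2) / S).
  { assert (K : (cs*S)*(cs*S) = (d/2)*(d/2)).
    { replace ((cs*S)*(cs*S)) with ((cs*cs)*(S*S)) by field. rewrite Hcsq.
      replace ((1 + c) / 2 * (S * S)) with ((S*S + c*(S*S))/2) by field.
      rewrite Hnum, HS2. field. }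
    assert (cs * S = d/2) by (apply sq_inj; [apply Rmult_le_pos|..]; lra).
    rewrite <- H. field. lra. }
  assert (Hsn : sn = (a/2) / S).
  { assert (K : (sn*S)*(sn*S) = (a/2)*(a/2)).
    { replace ((sn*S)*(sn*S)) with ((sn*sn)*(S*S)) by field. rewrite Hsnq.
      replace ((1 - c) / 2 * (S * S)) with ((S*S - c*(S*S))/2) by field.
      rewrite Hnum, HS2. field. }
    assert (sn * S = a/2) by (apply sq_inj; [apply Rmult_le_pos|..]; lra).
    rewrite <- H. field. lra. }
  split.
  - destruct F12 as [x1 y1]; destruct F34 as [x2 y2].
    destruct hF12 as [h1 h2]; destruct hF34 as [h3 h4].
    unfold dot, vsub in h1, h2, h3, h4; cbn [fst snd] in h1, h2, h3, h4.
    assert (x1 = 0) by nra. assert (x2 = 0) by nra. subst x1 x2.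
    assert (Hy1 : y1 = d - a^2/(2*d)).
    { assert (Q : (y1 - d) * d = - a^2/2) by lra.
      apply (Rmult_eq_reg_r d); [|lra].
      replace ((d - a ^ 2 / (2 * d)) * d) with (d*d - a^2/2) by (field; lra). lra. }
    assert (Hy2 : y2 = a^2/(2*d)).
    { assert (Q : y2 * d = a^2/2) by lra.
      apply (Rmult_eq_reg_r d); [|lra].
      replace (a ^ 2 / (2 * d) * d) with (a^2/2) by (field; lra). lra. }
    subst y1 y2.
    unfold w; fold sn; rewrite Hsn, Hcs.
    unfold edist, A1', A3; cbn [fst snd].
    rewrite (sqrt_eqv _ (a * S / d)).
    2: { apply div_nn; [apply Rmult_le_pos|]; lra. }
    2: { replace (a*S/d*(a*S/d)) with (a^2*(S*S)/(d*d)) by (field; lra). rewrite HS2. field. lra. }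
    rewrite (sqrt_eqv _ (a * S / d)).
    2: { apply div_nn; [apply Rmult_le_pos|]; lra. }
    2: { replace (a*S/d*(a*S/d)) with (a^2*(S*S)/(d*d)) by (field; lra). rewrite HS2. field. lra. }
    rewrite (sqrt_eqv _ (d - a^2/d)).
    2: { assert (a^2/d < d). { apply (Rmult_lt_reg_r d); [lra|].
           replace (a^2/d*d) with (a*a) by (field; lra). nra. } lra. }
    2: { field; lra. }
    transitivity ((4*a*(S*S) + a*(d*d-a*a))/(S*d)).
    { field; lra. }
    rewrite HS2. field. lra.
  - destruct hO12s as [t1 [Ht1 Eo1]]; destruct hO34s as [t2 [Ht2 Eo2]].
    subst O12 O34; cbn [fst snd] in *.
    replace (0 + t1 * (0 - 0)) with 0 in * by field.
    replace (0 + t2 * (0 - 0)) with 0 in * by field.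
    apply angle_O in hO12; [|lra]. apply angle_O in hO34; [|lra].
    set (r3 := sqrt 3).
    assert (Hr3 : r3 * r3 = 3) by (unfold r3; apply sqrt_sqrt; lra).
    assert (Hr3p : 1 < r3).
    { unfold r3; rewrite <- sqrt_1; apply sqrt_lt_1; lra. }
    set (v0 := a / (2 * r3)).
    assert (Hv0 : 0 <= v0) by (apply div_nn; lra).
    assert (Hv0s : v0 * v0 = a * a / 12).
    { unfold v0. replace (a / (2 * r3) * (a / (2 * r3))) with (a * a / (4 * (r3 * r3))) by (field; lra).
      rewrite Hr3. field. }
    set (y1 := d + t1 * (0 - d)) in *.
    set (y2 := d + t2 * (0 - d)) in *.
    assert (Hu : d - y1 = v0).
    { apply sq_inj; [unfold y1; nra | exact Hv0 |].
      rewrite Hv0s. replace ((d - y1)^2) with ((d-y1)*(d-y1)) in hO12 by field.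
      replace (a^2) with (a*a) in hO12 by field. lra. }
    assert (Hv : y2 = v0).
    { apply sq_inj; [unfold y2; nra | exact Hv0 |].
      rewrite Hv0s. replace ((0 - y2)^2) with (y2*y2) in hO34 by field.
      replace (a^2) with (a*a) in hO34 by field. lra. }
    fold cs sn. rewrite Hcs, Hsn.
    unfold edist, A1', A3; cbn [fst snd].
    assert (Hw : a / r3 * (a / r3) = a * a / 3).
    { replace (a / r3 * (a / r3)) with (a * a / (r3 * r3)) by (field; lra). rewrite Hr3. reflexivity. }
    rewrite (sqrt_eqv _ (a / r3)).
    2: { apply div_nn; lra. }
    2: { rewrite Hw. replace (d - y1) with v0 by lra.
         replace ((- a / 2 - 0) ^ 2 + v0 ^ 2) with (a*a/4 + v0*v0) by field. rewrite Hv0s. field. }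
    rewrite (sqrt_eqv _ (a / r3)).
    2: { apply div_nn; lra. }
    2: { rewrite Hw. replace (0 - y2) with (- v0) by lra.
         replace ((a / 2 - 0) ^ 2 + (- v0) ^ 2) with (a*a/4 + v0*v0) by field. rewrite Hv0s. field. }
    assert (Har : a / r3 = 2 * v0) by (unfold v0; field; lra).
    rewrite (sqrt_eqv _ (d - a / r3)).
    2: { assert (a / r3 < a). { apply (Rmult_lt_reg_r r3); [lra|].
           replace (a / r3 * r3) with a by (field; lra). nra. } lra. }
    2: { replace (y1 - y2) with (d - a/r3) by lra. field. lra. }
    transitivity (3 * a / r3 + d). { field. lra. }
    replace (3 * a / r3) with (a * r3) by (replace 3 with (r3*r3) by exact Hr3; field; lra).
    field. lra.
Qed.
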